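(* Fix a TxnSP instance. Every representable subschedule is prime.
   Context: TxnSP instance: jobs $J=\{1,\dots,n\}$, identical machines $1,\dots,m$, lengths $L_\alpha>0$, symmetric binary conflict matrix $C$ with zero diagonal ($C_{\alpha\beta}=1$ iff $\alpha\neq\beta$ conflict). Insertion process: Start from some state, where each machine $\mu$ has a processing time $P_\mu$ (initially $0$ when empty). An instruction $(\alpha,\mu)$ appends a not-yet-placed job $\alpha$ at the end of machine $\mu$. It assigns $\alpha$ the start time $st(\alpha)$, defined as the least $t\ge P_\mu$ such that $[t,t+L_\alpha)$ is disjoint from $[st(\beta),ct(\beta))$ for every already placed job $\beta$ with $C_{\alpha\beta}=1$. It then sets the completion time $ct(\alpha)=st(\alpha)+L_\alpha$ and updates $P_\mu:=ct(\alpha)$. A subschedule formed by $S\subseteq J$ is the result of applying, from the empty state, a list of instructions whose jobs are exactly $S$. Its size is $|S|$, and its makespan $ms$ is $\max_\mu P_\mu$. A subschedule $j$ is derived from $i$ (and $i$ is a root of $j$) if there is an instruction list producing $i$ and a further list whose application after it produces $j$. $LJ_i$ is the set of last jobs on the nonempty machines of $i$. A subschedule $i$ is reducible by $\alpha\in LJ_i$ if removing $\alpha$ from the end of its machine and appending it to a different machine (with start time given by the insertion rule relative to the remaining jobs) yields a strictly smaller makespan. $i$ is non-reducible if it is reducible by no $\alpha\in LJ_i$. A non-reducible subschedule $i$ of size $c$ is prime if for every $d<c$ it has at least one non-reducible root of size $d$. Derivation rule: given a sequence $(\alpha_1,\dots,\alpha_c)$ of distinct jobs, insert them in this order, each into a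 machine with currently smallest processing time $P_\mu$, breaking ties by smallest machine index. A subschedule is representable if it is obtained by applying the derivation rule to some sequence of distinct jobs (a permutation of the subset forming it). *)

(* Defs.v *)
From HB Require Import structures.
From mathcomp Require Import all_boot all_order all_algebra.
Set Implicit Arguments. Unset Strict Implicit. Unset Printing Implicit Defensive.
Import Order.TTheory GRing.Theory Num.Theory.
Local Open Scope ring_scope.

Section TxnSP.
Variable R : realFieldType.
Variables n m : nat.
Variable L : 'I_n -> R.
Variable C : 'I_n -> 'I_n -> bool.

(* A state: the ordered list of jobs on each machine, and start times
   (start times of unplaced jobs are irrelevant and kept at 0). *)
Record state := State {
  seqs : {ffun 'I_m -> seq 'I_n};
  stt  : {ffun 'I_n -> R} }.

Definition empty_state : state := State [ffun _ => [::]] [ffun _ => 0].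

Definition placed (s : state) (a : 'I_n) : bool := [exists mu, a \in seqs s mu].

Definition ct (s : state) (a : 'I_n) : R := stt s a + L a.

Definition proc (s : state) (mu : 'I_m) : R :=
  if seqs s mu is a :: r then ct s (last a r) else 0.

Definition makespan (s : state) : R := \big[Num.max/0]_(mu : 'I_m) proc s mu.

Definition size_of (s : state) : nat := #|[pred a | placed s a]|.

Definition free (s : state) (a : 'I_n) (t : R) : Prop :=
  forall b, placed s b -> C a b -> t + L a <= stt s b \/ ct s b <= t.

(* t is the start time given to a appended on machine mu by the insertion rule *)
Definition is_start (s : state) (a : 'I_n) (mu : 'I_m) (t : R) : Prop :=
  [/\ proc s mu <= t, free s a t &
      forall t', proc s mu <= t' -> free s a t' -> t <= t'].

Definition append (s : state) (a : 'I_n) (mu : 'I_m) (t : R) : state :=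
  State [ffun nu => if nu == mu then rcons (seqs s nu) a else seqs s nu]
        [ffun b => if b == a then t else stt s b].

Definition step (s : state) (ins : 'I_n * 'I_m) (s' : state) : Prop :=
  ~~ placed s ins.1 /\
  exists t, is_start s ins.1 ins.2 t /\ s' = append s ins.1 ins.2 t.

Fixpoint run (s : state) (l : seq ('I_n * 'I_m)) (s' : state) : Prop :=
  if l is ins :: l' then exists s1, step s ins s1 /\ run s1 l' s' else s' = s.

Definition subschedule (s : state) : Prop := exists l, run empty_state l s.

Definition root (r s : state) : Prop :=
  exists l1 l2, run empty_state l1 r /\ run r l2 s.

Definition last_job (s : state) (mu : 'I_m) (a : 'I_n) : Prop :=
  exists r, seqs s mu = rcons r a.

Definition remove_last (s : state) (mu : 'I_m) (r : seq 'I_n) : state :=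
  State [ffun nu => if nu == mu then r else seqs s nu] (stt s).

Definition reducible (s : state) : Prop :=
  exists (mu : 'I_m) (r : seq 'I_n) (a : 'I_n),
    seqs s mu = rcons r a /\
    exists (nu : 'I_m) (t : R),
      [/\ nu != mu, is_start (remove_last s mu r) a nu t &
          makespan (append (remove_last s mu r) a nu t) < makespan s].

Definition non_reducible (s : state) : Prop := ~ reducible s.

Definition prime_sub (s : state) : Prop :=
  [/\ subschedule s, non_reducible s &
      forall d, (d < size_of s)%N ->
        exists r, [/\ root r s, size_of r = d & non_reducible r]].

Definition rule_step (s : state) (a : 'I_n) (s' : state) : Prop :=
  exists mu : 'I_m,
    (forall nu : 'I_m, proc s mu < proc s nu \/ (proc s mu = proc s nu /\ (mu <= nu)%N))
    /\ step s (a, mu) s'.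

Fixpoint rule_run (s : state) (l : seq 'I_n) (s' : state) : Prop :=
  if l is a :: l' then exists s1, rule_step s a s1 /\ rule_run s1 l' s' else s' = s.

Definition representable (s : state) : Prop :=
  exists l : seq 'I_n, uniq l /\ rule_run empty_state l s.

End TxnSP.

(* Main.v *)
Require Import Defs.
From mathcomp Require Import all_boot all_order all_algebra.
Import Order.TTheory GRing.Theory Num.Theory.
Local Open Scope ring_scope.
Set Implicit Arguments. Unset Strict Implicit.

Section Proof.
Variable R : realFieldType.
Variables n m : nat.
Variable L : 'I_n -> R.
Variable C : 'I_n -> 'I_n -> bool.
Hypothesis HL : forall a, 0 < L a.

Notation state := (state R n m).

Lemma placed_append (s : state) x k t b :
  placed (append s x k t) b = (b == x) || placed s b.
Proof.
apply/existsP/idP.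
- case=> nu; rewrite /= ffunE; case: eqP => [->|_].
    by rewrite mem_rcons inE => /orP[->//|H]; apply/orP; right; apply/existsP; exists k.
  by move=> H; apply/orP; right; apply/existsP; exists nu.
- case/orP => [/eqP->|/existsP[nu H]].
    by exists k; rewrite /= ffunE eqxx mem_rcons inE eqxx.
  exists nu; rewrite /= ffunE; case: eqP => // E.
  by rewrite mem_rcons inE; apply/orP; right.
Qed.

Lemma proc_rcons (s : state) mu r a :
  seqs s mu = rcons r a -> proc L s mu = ct L s a.
Proof. by rewrite /proc => ->; case: r => //= b r; rewrite last_rcons. Qed.

Lemma proc_same (s s' : state) mu :
  seqs s' mu = seqs s mu -> (forall b, b \in seqs s mu -> stt s' b = stt s b) ->
  proc L s' mu = proc L s mu.
Proof.
rewrite /proc => -> H; case E: (seqs s mu) => [|a r] //.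
by rewrite /ct H // E mem_last.
Qed.

Definition Ext (s0 s : state) :=
  (forall b, placed s0 b -> placed s b /\ stt s b = stt s0 b) /\
  (forall nu, proc L s0 nu <= proc L s nu).

Lemma Ext_trans s1 s2 s3 : Ext s1 s2 -> Ext s2 s3 -> Ext s1 s3.
Proof.
move=> [A1 B1] [A2 B2]; split.
  by move=> b /A1 [/A2 [H1 ->] ->].
by move=> nu; apply: le_trans (B1 nu) (B2 nu).
Qed.

Lemma Ext_refl s : Ext s s.
Proof. by split. Qed.

Lemma Ext_step s x k s' : step L C s (x, k) s' -> Ext s s'.
Proof.
case=> /= Hx [t [[Hp _ _] ->]]; split.
  move=> b Hb; rewrite placed_append Hb orbT; split => //.
  by rewrite /= ffunE; case: eqP => // E; rewrite -E Hb in Hx.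
move=> nu; case: (eqVneq nu k) => [->|Hne].
  have -> : proc L (append s x k t) k = ct L (append s x k t) x.
    by apply: (@proc_rcons _ _ (seqs s k)); rewrite /= ffunE eqxx.
  rewrite /ct /= ffunE eqxx; apply: le_trans Hp _.
  by rewrite lerDl ltW.
rewrite (@proc_same s); first by [].
  by rewrite /= ffunE (negbTE Hne).
move=> b Hb; rewrite /= ffunE; case: eqP => // E.
by rewrite -E in Hx; case/negP: Hx; apply/existsP; exists nu.
Qed.

Definition Inv (s : state) :=
  (forall a mu nu, a \in seqs s mu -> a \in seqs s nu -> mu = nu) /\
  (forall mu a, a \in seqs s mu -> exists s0,
     [/\ ~~ placed s0 a, is_start L C s0 a mu (stt s a),
         (forall nu, proc L s0 mu <= proc L s0 nu) & Ext s0 s]).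

Lemma Inv_empty : Inv (empty_state R n m).
Proof. by split => [a mu nu|mu a]; rewrite /= ffunE. Qed.

Lemma Inv_step s x s' : Inv s -> rule_step L C s x s' -> Inv s'.
Proof.
move=> [U H] [k [Hmin Hst]].
have Hext := Ext_step Hst.
case: Hst => /= Hx [t [Hs Es']].
have Hmem : forall a nu, a \in seqs s' nu = ((nu == k) && (a == x)) || (a \in seqs s nu).
  move=> a nu; rewrite Es' /= ffunE; case: eqP => [->|_] //=.
  by rewrite mem_rcons inE.
have notx : forall nu, x \notin seqs s nu.
  by move=> nu; apply/negP => Hin; case/negP: Hx; apply/existsP; exists nu.
split.
  move=> a mu nu; rewrite !Hmem.
  case/orP => [/andP[/eqP -> /eqP ->]|Ha]; case/orP => [/andP[/eqP -> /eqP E]|Hb] //.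
  - by rewrite (negbTE (notx nu)) in Hb.
  - by rewrite E (negbTE (notx mu)) in Ha.
  - exact: U Ha Hb.
move=> mu a; rewrite Hmem; case/orP => [/andP[/eqP -> /eqP ->]|Ha].
  exists s; split => //; first by rewrite Es' /= ffunE eqxx.
  by move=> nu; case: (Hmin nu) => [/ltW //|[-> _]].
have [s0 [H1 H2 H3 H4]] := H mu a Ha.
exists s0; split => //.
  have -> : stt s' a = stt s a => //.
  rewrite Es' /= ffunE; case: eqP => // E.
  by rewrite E (negbTE (notx mu)) in Ha.
exact: Ext_trans H4 Hext.
Qed.

Lemma Inv_run s l s' : Inv s -> rule_run L C s l s' -> Inv s'.
Proof.
elim: l s => [|x l IH] s /= Hs; first by move=> ->.
by case=> s1 [H1 H2]; apply: (IH s1) => //; apply: Inv_step H1.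
Qed.

Lemma makespan_ge0 (s : state) : 0 <= makespan L s.
Proof.
rewrite /makespan; apply: (big_rec (fun x => 0 <= x)) => //.
by move=> i y _ Hy; rewrite le_max Hy orbT.
Qed.

Lemma Inv_nonred s : Inv s -> non_reducible L C s.
Proof.
move=> [U H] [mu [r [a [Es [nu [t' [Hne Hst Hlt]]]]]]].
set s1 := remove_last s mu r in Hst Hlt.
set s2 := append s1 a nu t' in Hlt.
have Ha : a \in seqs s mu by rewrite Es mem_rcons inE eqxx.
have [s0 [Ha0 [Hp0 Hf0 Hm0] Hr0 [E1 E2]]] := H mu a Ha.
case: Hst => Hp1 Hf1 _.
have Pnu : proc L s1 nu = proc L s nu.
  apply: proc_same => //; by rewrite /s1 /= ffunE (negbTE Hne).
have Hle : stt s a <= t'.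
  apply: Hm0.
    apply: le_trans (Hr0 nu) _; apply: le_trans (E2 nu) _; by rewrite -Pnu.
  move=> b Hb Cab.
  have [Hbs Est] := E1 b Hb.
  have Hba : b != a by apply/negP => /eqP E; rewrite -E Hb in Ha0.
  have Hb1 : placed s1 b.
    case/existsP: Hbs => k Hk; apply/existsP; exists k; rewrite /s1 /= ffunE.
    case: eqP => [E|//]; move: Hk; rewrite E Es mem_rcons inE (negbTE Hba) //.
  case: (Hf1 b Hb1 Cab); rewrite /ct /s1 /= Est; by [left|right].
have P2nu : proc L s2 nu = t' + L a.
  rewrite (@proc_rcons _ _ (seqs s1 nu) a); last by rewrite /s2 /= ffunE eqxx.
  by rewrite /ct /s2 /= ffunE eqxx.
have : makespan L s <= makespan L s2.
  apply: bigmax_le; first exact: makespan_ge0.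
  move=> k _; have M2 : forall k, proc L s2 k <= makespan L s2.
    by move=> k'; apply: le_bigmax.
  case: (eqVneq k mu) => [->|Hkmu].
    rewrite (proc_rcons Es) /ct; apply: le_trans (M2 nu); rewrite P2nu.
    by rewrite lerD2r.
  case: (eqVneq k nu) => [->|Hknu].
    apply: le_trans (M2 nu); rewrite P2nu -Pnu; apply: le_trans Hp1 _.
    by rewrite lerDl ltW.
  apply: le_trans (M2 k); rewrite (@proc_same s); first by [].
    by rewrite /s2 /s1 /= !ffunE (negbTE Hknu) (negbTE Hkmu).
  move=> b Hb; rewrite /s2 /s1 /= ffunE; case: eqP => // E.
  by rewrite E in Hb; have := U a mu k Ha Hb => E'; rewrite E' eqxx in Hkmu.
by rewrite leNgt Hlt.
Qed.

Lemma rule_run_cat (s : state) l1 l2 (s' : state) : rule_run L C s (l1 ++ l2) s' ->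
  exists r, rule_run L C s l1 r /\ rule_run L C r l2 s'.
Proof.
elim: l1 s => [|x l1 IH] s /=; first by move=> H; exists s.
case=> s1 [H1 H2]; have [r [Hr1 Hr2]] := IH s1 H2.
by exists r; split => //; exists s1.
Qed.

Lemma rule_run_run (s : state) l (s' : state) : rule_run L C s l s' -> exists il, run L C s il s'.
Proof.
elim: l s => [|x l IH] s /=; first by move=> ->; exists [::].
case=> s1 [[k [_ Hst]] H2]; have [il Hil] := IH s1 H2.
by exists ((x, k) :: il); exists s1.
Qed.

Lemma size_of_step (s : state) x (k : 'I_m) t : ~~ placed s x ->
  size_of (append s x k t) = (size_of s).+1.
Proof.
move=> Hx; rewrite /size_of.
rewrite (eq_card (B := [predU1 x & [pred a | placed s a]])); last first.
  by move=> b; rewrite !inE placed_append.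
by rewrite cardU1 inE Hx.
Qed.

Lemma size_of_run (s : state) l (s' : state) : rule_run L C s l s' -> size_of s' = (size_of s + size l)%N.
Proof.
elim: l s => [|x l IH] s /=; first by move=> ->; rewrite addn0.
case=> s1 [[k [_ [Hx [t [_ ->]]]]] H2].
by rewrite (IH _ H2) size_of_step // addnS.
Qed.

Lemma size_of_empty : size_of (empty_state R n m) = 0%N.
Proof.
by apply: eq_card0 => b; rewrite !inE; apply/existsP => -[nu]; rewrite /= ffunE.
Qed.

End Proof.

Theorem lemma6 (R : realFieldType) (n m : nat) (L : 'I_n -> R)
    (C : 'I_n -> 'I_n -> bool)
    (HL : forall a, 0 < L a)
    (HCsym : forall a b, C a b = C b a)
    (HCdiag : forall a, C a a = false)
    (s : state R n m) :
  @representable R n m L C s -> @prime_sub R n m L C s.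
Proof.
case=> l [Hu Hl]; split.
- by have [il Hil] := rule_run_run Hl; exists il.
- apply: (Inv_nonred HL); apply: (Inv_run HL _ Hl); exact: Inv_empty.
move=> d; rewrite (size_of_run Hl) size_of_empty add0n => Hd.
move: Hl; rewrite -(cat_take_drop d l) => /rule_run_cat [r [H1 H2]].
exists r; split.
- have [il1 ?] := rule_run_run H1; have [il2 ?] := rule_run_run H2.
  by exists il1, il2.
- by rewrite (size_of_run H1) size_of_empty add0n size_take Hd.
- apply: (Inv_nonred HL); apply: (Inv_run HL _ H1); exact: Inv_empty.
Qed.
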